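(* Let $x_0<\dots<x_n$ and $\hat x_0<\dots<\hat x_n$ be real numbers with $\hat x_0=x_0$ and $\hat x_n=x_n$, let $\mathbf{y}\in\mathbb{R}^{n+1}$, and let $z_k=z_k(\mathbf{x},\hat{\mathbf{x}})$. Then \[ \|\mathbf{y}\mathbf{z}\|_\infty\ \le\ \sup_{x_0\le t\le x_n}\bigl|p(t;\hat{\mathbf{x}},\mathbf{y},\lambda(\mathbf{x}))-P_{\mathbf{y}}(t)\bigr|\ \le\ \Lambda(\hat{\mathbf{x}})\,\|\mathbf{y}\mathbf{z}\|_\infty, \] where $(\mathbf{y}\mathbf{z})_k=y_kz_k$. Moreover $p(t;\hat{\mathbf{x}},\mathbf{y},\lambda(\mathbf{x}))=P_{\mathbf{y}+\mathbf{y}\mathbf{z}}(t)$ for all $t$.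
   Context: $\lambda_k(\mathbf{x}):=1/\prod_{j\neq k}(x_k-x_j)$ and $\lambda(\mathbf x)=(\lambda_0(\mathbf x),\dots,\lambda_n(\mathbf x))$; $z_k(\mathbf{x},\hat{\mathbf{x}}):=(\lambda_k(\mathbf{x})-\lambda_k(\hat{\mathbf{x}}))/\lambda_k(\hat{\mathbf{x}})$. The first barycentric formula is the polynomial $p(t;\mathbf{u},\mathbf{y},\mathbf{w}):=\bigl(\prod_{k=0}^n(t-u_k)\bigr)\sum_{k=0}^n\frac{w_ky_k}{t-u_k}$ (extended by continuity at the nodes). For $\mathbf{v}\in\mathbb{R}^{n+1}$, $P_{\mathbf{v}}$ denotes the unique polynomial of degree at most $n$ with $P_{\mathbf{v}}(\hat x_k)=v_k$ for all $k$. $\Lambda(\hat{\mathbf{x}}):=\max_{t\in[x_0,x_n]}\sum_{j}|\ell_j(t)|$ with $\ell_j$ the Lagrange polynomials for the nodes $\hat{\mathbf{x}}$. *)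

(* Defs.v *)
From HB Require Import structures.
From mathcomp Require Import all_boot all_order all_algebra.
From mathcomp Require Import classical_sets reals.
Set Implicit Arguments. Unset Strict Implicit. Unset Printing Implicit Defensive.
Import Order.TTheory GRing.Theory Num.Theory.
Local Open Scope ring_scope.

Section Defs.
Variables (R : realType) (n : nat).

Definition bary_lambda (x : 'I_n.+1 -> R) (k : 'I_n.+1) : R :=
  (\prod_(j < n.+1 | j != k) (x k - x j))^-1.

Definition bary_z (x xh : 'I_n.+1 -> R) (k : 'I_n.+1) : R :=
  (bary_lambda x k - bary_lambda xh k) / bary_lambda xh k.

(* First barycentric formula p(t; u, y, w) = (prod_k (t - u_k)) sum_k w_k y_k/(t - u_k),
   extended by continuity at the nodes, i.e. the polynomial
   sum_k w_k y_k prod_{j <> k} (X - u_j). *)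
Definition bary1 (u y w : 'I_n.+1 -> R) : {poly R} :=
  \sum_(k < n.+1) (w k * y k) *: \prod_(j < n.+1 | j != k) ('X - (u j)%:P).

Definition lagrange_basis (xh : 'I_n.+1 -> R) (j : 'I_n.+1) : {poly R} :=
  \prod_(k < n.+1 | k != j) ((xh j - xh k)^-1 *: ('X - (xh k)%:P)).

Definition lebesgue_const (xh : 'I_n.+1 -> R) (a b : R) : R :=
  sup [set s | exists t, a <= t <= b /\
         s = \sum_(j < n.+1) `|(lagrange_basis xh j).[t]|].

Definition supnorm_on (a b : R) (f : R -> R) : R :=
  sup [set s | exists t, a <= t <= b /\ s = `|f t|].

Definition vnorm_inf (v : 'I_n.+1 -> R) : R :=
  \big[Num.max/0]_(k < n.+1) `|v k|.

End Defs.

(* Main.v *)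
Require Import Defs.
From HB Require Import structures.
From mathcomp Require Import all_boot all_order all_algebra.
From mathcomp Require Import classical_sets reals.
From mathcomp Require Import ring lra.
Import Order.TTheory GRing.Theory Num.Theory.
Local Open Scope ring_scope.

Section H.
Variables (R : realType) (n : nat).

Lemma size_prodX (c : 'I_n.+1 -> R) (k : 'I_n.+1) :
  size (\prod_(j < n.+1 | j != k) ('X - (c j)%:P)) = n.+1.
Proof.
rewrite -big_filter size_prod_XsubC.
have [e _ _ [_ ->]] := big_enumP (fun j : 'I_n.+1 => j != k).
by rewrite cardC1 card_ord.
Qed.

Lemma uniq_nodes (xh : 'I_n.+1 -> R) (q : {poly R}) :
  (forall i j : 'I_n.+1, (i < j)%N -> xh i < xh j) ->
  (size q <= n.+1)%N -> (forall i, q.[xh i] = 0) -> q = 0.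
Proof.
move=> mono sq hq.
apply: (@roots_geq_poly_eq0 _ q [seq xh i | i <- enum 'I_n.+1]).
- by apply/allP => r /mapP [i _ ->]; apply/rootP.
- rewrite map_inj_uniq ?enum_uniq // => i j eij.
  case: (ltngtP i j) => [lt|lt|/val_inj //];
  by have := mono _ _ lt; rewrite eij ltxx.
- by rewrite size_map size_enum_ord.
Qed.

Definition pb (q : {poly R}) (a b : R) := \sum_(i < size q) `|q`_i| * (`|a| + `|b|) ^+ i.
Lemma poly_bound (q : {poly R}) (a b t : R) :
  a <= t <= b -> `|q.[t]| <= pb q a b.
Proof.
move=> /andP [ha hb].
have ht : `|t| <= `|a| + `|b|.
  rewrite ler_norml; have := ler_norm b; have := ler_norm (- a).
  rewrite normrN; have := normr_ge0 a; have := normr_ge0 b; lra.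
rewrite horner_coef; apply: le_trans (ler_norm_sum _ _ _) _.
apply: ler_sum => i _; rewrite normrM normrX.
by apply: ler_wpM2l => //; apply: lerXn2r; rewrite ?nnegrE ?addr_ge0.
Qed.


Variable xh : 'I_n.+1 -> R.
Hypothesis mono : forall i j : 'I_n.+1, (i < j)%N -> xh i < xh j.

Lemma xh_neq i j : i != j -> xh i - xh j != 0.
Proof.
move=> nij; rewrite subr_eq0; case: (ltngtP i j) => [lt|lt|/val_inj eq].
- by rewrite lt_eqF ?mono.
- by rewrite gt_eqF ?mono.
- by rewrite eq eqxx in nij.
Qed.

Lemma lambda_neq0 k : bary_lambda xh k != 0.
Proof.
rewrite /bary_lambda invr_eq0 prodf_seq_neq0; apply/allP => j _.
by apply/implyP => /negbTE; rewrite eq_sym => /negbT /xh_neq.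
Qed.

Lemma prod_node k i :
  (\prod_(j < n.+1 | j != k) ('X - (xh j)%:P)).[xh i] =
  if i == k then (bary_lambda xh k)^-1 else 0.
Proof.
rewrite horner_prod; case: eqP => [->|/eqP nik].
  by rewrite /bary_lambda invrK; apply: eq_bigr => j _; rewrite hornerXsubC.
by rewrite (bigD1 i) //= hornerXsubC subrr mul0r.
Qed.

Lemma lagr_node j i : (lagrange_basis xh j).[xh i] = (i == j)%:R.
Proof.
rewrite /lagrange_basis horner_prod; case: eqP => [->|/eqP nij].
  apply: big1 => k kj; rewrite hornerZ hornerXsubC mulVf //.
  by apply: xh_neq; rewrite eq_sym.
by rewrite (bigD1 i) //= hornerZ hornerXsubC subrr mulr0 mul0r.
Qed.

Lemma size_lagr j : (size (lagrange_basis xh j) <= n.+1)%N.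
Proof.
rewrite /lagrange_basis scaler_prod; apply: leq_trans (size_scale_leq _ _) _.
by rewrite size_prodX.
Qed.

Lemma size_sum_le (F : 'I_n.+1 -> {poly R}) :
  (forall k, (size (F k) <= n.+1)%N) -> (size (\sum_k F k)%R <= n.+1)%N.
Proof.
move=> hF; apply: (big_ind (fun q : {poly R} => size q <= n.+1)%N) => //.
- by rewrite size_poly0.
- by move=> p q hp hq; apply: leq_trans (size_polyD _ _) _; rewrite geq_max hp hq.
Qed.

End H.

Theorem theorem2 (R : realType) (n : nat) (x xh y : 'I_n.+1 -> R)
  (Py Pyz : {poly R}) :
  (forall i j : 'I_n.+1, (i < j)%N -> x i < x j) ->
  (forall i j : 'I_n.+1, (i < j)%N -> xh i < xh j) ->
  xh ord0 = x ord0 -> xh ord_max = x ord_max ->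
  (size Py <= n.+1)%N -> (forall k, Py.[xh k] = y k) ->
  (size Pyz <= n.+1)%N ->
  (forall k, Pyz.[xh k] = y k + y k * bary_z x xh k) ->
  let p := bary1 xh y (bary_lambda x) in
  let yz := fun k => y k * bary_z x xh k in
  vnorm_inf yz <= supnorm_on (x ord0) (x ord_max) (fun t => p.[t] - Py.[t])
  /\ supnorm_on (x ord0) (x ord_max) (fun t => p.[t] - Py.[t])
       <= lebesgue_const xh (x ord0) (x ord_max) * vnorm_inf yz
  /\ (forall t, p.[t] = Pyz.[t]).
Proof.
move=> hx mono h0 hn sPy hPy sPyz hPyz p yz.
have hp : forall i, p.[xh i] = y i + yz i.
  move=> i; rewrite /p /bary1 horner_sum (bigD1 i) //= [X in _ + X]big1 => [|k ki].
    rewrite hornerZ prod_node // eqxx addr0 /yz /bary_z.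
    have := @lambda_neq0 _ _ _ mono i; move: (bary_lambda xh i) => l hl.
    by field.
  by rewrite hornerZ prod_node // eq_sym (negbTE ki) mulr0.
have hsp : (size p <= n.+1)%N.
  apply: size_sum_le => k; apply: leq_trans (size_scale_leq _ _) _.
  by rewrite size_prodX.
have part3 : forall t, p.[t] = Pyz.[t].
  have : p - Pyz = 0.
    apply: (@uniq_nodes _ _ _ _ mono).
      by apply: leq_trans (size_polyD _ _) _; rewrite size_polyN geq_max hsp.
    by move=> i; rewrite hornerD hornerN hp hPyz subrr.
  by move=> /eqP; rewrite subr_eq0 => /eqP ->.
have hQ : p - Py = \sum_j yz j *: lagrange_basis xh j.
  apply/eqP; rewrite -subr_eq0; apply/eqP; apply: (@uniq_nodes _ _ _ _ mono).
    apply: leq_trans (size_polyD _ _) _; rewrite size_polyN geq_max.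
    rewrite (leq_trans (size_polyD _ _)) ?geq_max ?size_polyN ?hsp ?sPy //=.
    apply: size_sum_le => k; apply: leq_trans (size_scale_leq _ _) _.
    exact: size_lagr.
  move=> i.
  have hs : (\sum_j yz j *: lagrange_basis xh j).[xh i] = yz i.
    rewrite horner_sum (bigD1 i) //= [X in _ + X]big1.
      by rewrite hornerZ lagr_node // eqxx mulr1 addr0.
    by move=> k ki; rewrite hornerZ lagr_node // eq_sym (negbTE ki) mulr0.
  by rewrite !hornerD !hornerN hp hPy hs; ring.
have hf : forall t, p.[t] - Py.[t] = \sum_j yz j * (lagrange_basis xh j).[t].
  move=> t; rewrite -hornerN -hornerD hQ horner_sum.
  by apply: eq_bigr => j _; rewrite hornerZ.
set a := x ord0; set b := x ord_max.
have hnode : forall i, a <= xh i <= b.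
  move=> i; rewrite /a /b -h0 -hn; apply/andP; split.
    case: (posnP i) => [i0|ip].
      by have -> : i = ord0 by apply: val_inj.
    apply: ltW; exact: mono.
  case: (ltnP i n) => [lt|ge].
    apply: ltW; exact: mono.
  have -> : i = ord_max by apply: val_inj; apply/eqP; rewrite eqn_leq ge -ltnS ltn_ord.
  by [].
have hab : a <= b by have /andP [h1 h2] := hnode ord0; exact: le_trans h1 h2.
set S := [set s : R | exists t, a <= t <= b /\ s = `|p.[t] - Py.[t]|]%classic.
have hsupS : has_sup S.
  split; first by exists `|p.[a] - Py.[a]|, a; rewrite lexx hab.
  exists (pb _ (p - Py) a b) => s [t [ht ->]].
  by rewrite -hornerN -hornerD; exact: poly_bound.
set L := [set s : R | exists t, a <= t <= b /\
         s = \sum_(j < n.+1) `|(lagrange_basis xh j).[t]|]%classic.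
have hsupL : has_sup L.
  split; first by exists (\sum_(j < n.+1) `|(lagrange_basis xh j).[a]|), a; rewrite lexx hab.
  exists (\sum_(j < n.+1) pb _ (lagrange_basis xh j) a b)%R => s [t [ht ->]].
  by apply: ler_sum => j _; exact: poly_bound.
have M0 : 0 <= vnorm_inf yz.
  exact: le_trans (normr_ge0 (yz ord0)) (le_bigmax _ _ ord0).
split; last split => //.
- rewrite /supnorm_on -/a -/b -/S.
  have s0 : 0 <= sup S.
    apply: le_trans (normr_ge0 (p.[a] - Py.[a])) _.
    by apply: sup_upper_bound => //; exists a; rewrite lexx hab.
  apply: bigmax_le => // i _.
  apply: sup_upper_bound => //; exists (xh i); split; first exact: hnode.
  by rewrite hp hPy addrC addKr.
- rewrite /supnorm_on /lebesgue_const -/a -/b -/S -/L.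
  apply: ge_sup; first by exists `|p.[a] - Py.[a]|, a; rewrite lexx hab.
  move=> s [t [ht ->]]; rewrite hf.
  apply: le_trans (ler_norm_sum _ _ _) _.
  apply: le_trans (_ : \sum_j vnorm_inf yz * `|(lagrange_basis xh j).[t]| <= _).
    apply: ler_sum => j _; rewrite normrM; apply: ler_wpM2r => //.
    exact: le_bigmax.
  rewrite -mulr_sumr mulrC; apply: ler_wpM2r => //.
  by apply: sup_upper_bound => //; exists t.
Qed.
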